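(* Let $\Phi$ be the matrix (with respect to $h_0$) of a left-invariant metric on $G$ of nonnegative sectional curvature, and let $\mathfrak p_0\subset\mathfrak g$ be the eigenspace of $\Phi$ for its smallest eigenvalue (equivalently, the eigenspace of $\Psi=I-\Phi^{-1}$ for its smallest eigenvalue). If $X\in\mathfrak p_0$, $Y\in\mathfrak g$ and $[X,Y]=0$, then $[X,\Phi^{-1}Y]\in\mathfrak p_0$.
   Context: $G$ is a compact Lie group with Lie algebra $\mathfrak g$ and bi-invariant metric $h_0$. The matrix of a left-invariant metric $h$ is the unique $h_0$-self-adjoint positive definite endomorphism $\Phi$ of $\mathfrak g$ with $h(X,Y)=h_0(\Phi X,Y)$ for all $X,Y\in\mathfrak g$. *)

(* Defs.v *)
From HB Require Import structures.
From mathcomp Require Import all_boot all_order all_algebra.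
From mathcomp Require Import reals.
Set Implicit Arguments. Unset Strict Implicit. Unset Printing Implicit Defensive.
Import Order.TTheory GRing.Theory Num.Theory.
Local Open Scope ring_scope.

(* The Lie algebra g is identified (via a basis) with row vectors 'rV[R]_n;
   endomorphisms act on the right: X |-> X *m A. *)

Definition form (R : realType) (n : nat) (B : 'M[R]_n) (X Y : 'rV[R]_n) : R :=
  (X *m B *m Y^T) 0 0.

(* compact Lie algebra with bi-invariant (ad-invariant) inner product h0 = form B *)
Definition compact_lie_data (R : realType) (n : nat)
    (br : 'rV[R]_n -> 'rV[R]_n -> 'rV[R]_n) (B : 'M[R]_n) : Prop :=
  (forall (a : R) X Y Z, br (a *: X + Y) Z = a *: br X Z + br Y Z) /\
  (forall X Y, br X Y = - br Y X) /\
  (forall X Y Z, br X (br Y Z) + br Y (br Z X) + br Z (br X Y) = 0) /\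
  (forall X Y, form B X Y = form B Y X) /\
  (forall X, X != 0 -> 0 < form B X X) /\
  (forall X Y Z, form B (br Z X) Y + form B X (br Z Y) = 0).

(* Phi is the matrix w.r.t. h0 of a left-invariant metric:
   h0-self-adjoint and positive definite. *)
Definition metric_matrix (R : realType) (n : nat) (B Phi : 'M[R]_n) : Prop :=
  (forall X Y, form B (X *m Phi) Y = form B X (Y *m Phi)) /\
  (forall X, X != 0 -> 0 < form B (X *m Phi) X).

Definition lmetric (R : realType) (n : nat) (B Phi : 'M[R]_n) (X Y : 'rV[R]_n) : R :=
  form B (X *m Phi) Y.

(* Levi-Civita connection on left-invariant fields, via the Koszul formula *)
Definition koszul (R : realType) (n : nat)
    (br : 'rV[R]_n -> 'rV[R]_n -> 'rV[R]_n) (h : 'rV[R]_n -> 'rV[R]_n -> R)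
    (nabla : 'rV[R]_n -> 'rV[R]_n -> 'rV[R]_n) : Prop :=
  forall X Y Z, 2 * h (nabla X Y) Z = h (br X Y) Z - h (br X Z) Y - h (br Y Z) X.

Definition curv (R : realType) (n : nat)
    (br nabla : 'rV[R]_n -> 'rV[R]_n -> 'rV[R]_n) (X Y Z : 'rV[R]_n) : 'rV[R]_n :=
  nabla X (nabla Y Z) - nabla Y (nabla X Z) - nabla (br X Y) Z.

Definition nonneg_sec_curv (R : realType) (n : nat)
    (br : 'rV[R]_n -> 'rV[R]_n -> 'rV[R]_n) (B Phi : 'M[R]_n) : Prop :=
  exists nabla, koszul br (lmetric B Phi) nabla /\
    forall X Y, 0 <= lmetric B Phi (curv br nabla X Y Y) X.

(* Main.v *)
Require Import Defs.
From HB Require Import structures.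
From mathcomp Require Import all_boot all_order all_algebra.
From mathcomp Require Import reals.
From mathcomp Require Import all_classical all_reals all_analysis.
From mathcomp Require Import ring lra.
Import Order.TTheory GRing.Theory Num.Theory.
Import numFieldNormedType.Exports.
Local Open Scope ring_scope.
Local Notation form := Defs.form.
Lemma cont_sum (R : realType) (T : topologicalType) (I : Type) (s : seq I)
  (F : I -> T -> R^o) : (forall i, continuous (F i)) ->
  continuous (fun x => \sum_(i <- s) F i x : R^o).
Proof.
move=> hF; elim: s => [|a s IH] x.
  rewrite (_ : (fun x => _) = fun=> 0); first exact: cst_continuous.
  by apply: funext => y; rewrite big_nil.
rewrite (_ : (fun x => _) = F a + (fun x => \sum_(i <- s) F i x)); last first.
  by apply: funext => y; rewrite big_cons.
exact: (continuousD (hF a x) (IH x)).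
Qed.

Lemma cont_coord (R : realType) n (A : 'M[R]_n) j :
  continuous (fun v : 'rV[R]_n => (v *m A) 0 j).
Proof.
have -> : (fun v : 'rV[R]_n => (v *m A) 0 j) = (fun v => \sum_k (v 0 k * A k j) : R^o).
  by apply: funext => v; rewrite mxE.
apply: cont_sum => k x.
apply: continuousM; last exact: cst_continuous.
exact: coord_continuous.
Qed.

Lemma formE (R : realType) n (B M : 'M[R]_n) (v : 'rV[R]_n) :
  form B (v *m M) v = \sum_j ((v *m (M *m B)) 0 j * v 0 j).
Proof. by rewrite /form mulmxA mxE; apply: eq_bigr => j _; congr (_ * _); rewrite mxE. Qed.

Lemma cont_form (R : realType) n (B M : 'M[R]_n) :
  continuous (fun v : 'rV[R]_n => form B (v *m M) v).
Proof.
have -> : (fun v : 'rV[R]_n => form B (v *m M) v) = (fun v => \sum_j ((v *m (M *m B)) 0 j * v 0 j) : R^o).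
  by apply: funext => v; rewrite formE.
apply: cont_sum => j x; apply: continuousM; first exact: cont_coord.
exact: coord_continuous.
Qed.
Lemma formDl (R : realType) n (B : 'M[R]_n) X Y Z :
  form B (X + Y) Z = form B X Z + form B Y Z.
Proof. by rewrite /form !mulmxDl mxE. Qed.
Lemma formZl (R : realType) n (B : 'M[R]_n) a X Z :
  form B (a *: X) Z = a * form B X Z.
Proof. by rewrite /form -!scalemxAl mxE. Qed.
Lemma formNl (R : realType) n (B : 'M[R]_n) X Z :
  form B (- X) Z = - form B X Z.
Proof. by rewrite -scaleN1r formZl mulN1r. Qed.
Lemma formBl (R : realType) n (B : 'M[R]_n) X Y Z :
  form B (X - Y) Z = form B X Z - form B Y Z.
Proof. by rewrite formDl formNl. Qed.
Lemma form0l (R : realType) n (B : 'M[R]_n) Z : form B 0 Z = 0.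
Proof. by rewrite /form !mul0mx mxE. Qed.
Lemma formDr (R : realType) n (B : 'M[R]_n) X Y Z :
  form B Z (X + Y) = form B Z X + form B Z Y.
Proof. by rewrite /form raddfD /= mulmxDr mxE. Qed.
Lemma formZr (R : realType) n (B : 'M[R]_n) a X Z :
  form B Z (a *: X) = a * form B Z X.
Proof. by rewrite /form linearZ /= -scalemxAr mxE. Qed.
Lemma formNr (R : realType) n (B : 'M[R]_n) X Z :
  form B Z (- X) = - form B Z X.
Proof. by rewrite -scaleN1r formZr mulN1r. Qed.
Lemma formBr (R : realType) n (B : 'M[R]_n) X Y Z :
  form B Z (X - Y) = form B Z X - form B Z Y.
Proof. by rewrite formDr formNr. Qed.
Lemma form0r (R : realType) n (B : 'M[R]_n) Z : form B Z 0 = 0.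
Proof. by rewrite /form trmx0 mulmx0 mxE. Qed.
Lemma eig_of_min (R : realType) n (B Phi : 'M[R]_n) (mu : R) c :
  (forall X Y, form B X Y = form B Y X) ->
  (forall X, X != 0 -> 0 < form B X X) ->
  (forall X Y, form B (X *m Phi) Y = form B X (Y *m Phi)) ->
  (forall V, mu * form B V V <= form B (V *m Phi) V) ->
  mu * form B c c = form B (c *m Phi) c -> c *m Phi = mu *: c.
Proof.
move=> sym pos sa hmin hc.
have [E defE] : {E | E = c *m Phi - mu *: c} by eexists.
have hEc : form B E c = form B c E by rewrite sym.
have hEPc : form B (E *m Phi) c = form B (c *m Phi) E by rewrite sa sym.
have hEE : form B E E = form B (c *m Phi) E - mu * form B c E.
  by rewrite {1}defE formBl formZl.
have hqE := hmin E.
have key t : 0 <= 2 * t * form B E E + t ^+ 2 * (form B (E *m Phi) E - mu * form B E E).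
  have := hmin (c + t *: E).
  rewrite mulmxDl -scalemxAl !(formDl, formDr, formZl, formZr) hEc hEPc.
  move=> h; rewrite hEE.
  have -> : (t ^+ 2) = t * t by rewrite expr2.
  nra.
apply/eqP; rewrite -subr_eq0 -defE.
apply/negP => /negP EN0.
have e0 := pos _ EN0.
set q := form B (E *m Phi) E - mu * form B E E.
have q0 : 0 <= q by rewrite /q; lra.
set k := form B E E / (q + 1).
have k0 : 0 < k by rewrite /k divr_gt0 // ; lra.
have kq : k * q < form B E E.
  rewrite /k mulrAC ltr_pdivrMr; last by lra.
  nra.
have := key (- k).
rewrite -/q.
have -> : (- k) ^+ 2 = k * k by rewrite sqrrN expr2.
nra.
Qed.

Lemma cont_form1 (R : realType) n (B : 'M[R]_n) :
  continuous (fun v : 'rV[R]_n => form B v v).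
Proof.
have -> : (fun v : 'rV[R]_n => form B v v) = (fun v => form B (v *m 1%:M) v).
  by apply: funext => v; rewrite mulmx1.
exact: cont_form.
Qed.

Local Open Scope classical_set_scope.
Lemma rayleigh (R : realType) n (B Phi : 'M[R]_n) (lam0 : R) :
  (forall X Y, form B X Y = form B Y X) ->
  (forall X, X != 0 -> 0 < form B X X) ->
  (forall X Y, form B (X *m Phi) Y = form B X (Y *m Phi)) ->
  (forall mu, eigenvalue Phi mu -> lam0 <= mu) ->
  forall V, lam0 * form B V V <= form B (V *m Phi) V.
Proof.
move=> sym pos sa hmin V.
have [->|Vnz] := eqVneq V 0; first by rewrite mul0mx !form0l mulr0.
pose S := [set v : 'rV[R]_n | `|v| = 1]%classic.
pose f v := form B (v *m Phi) v / form B v v.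
have Snz v : S v -> v != 0.
  by rewrite /S /= => h; apply/eqP => v0; move: h; rewrite v0 normr0 => /eqP; rewrite eq_sym oner_eq0.
have nS W : W != 0 -> S (`|W|^-1 *: W).
  by move=> Wnz; rewrite /S /= normrZ normfV normr_id mulVf // normr_eq0.
have S0 : S !=set0 by exists (`|V|^-1 *: V); exact: nS.
have cS : compact S.
  apply: bounded_closed_compact.
    exists 1; split => // M M1 x /= Sx; rewrite Sx; exact: ltW.
  have -> : S = ((fun v => `|v|) @^-1` [set x : R | x = 1])%classic by [].
  apply: preimage_closed; last exact: closed_eq.
  by move=> x _; exact: norm_continuous.
have cf : {within S, continuous f}.
  apply: continuous_in_subspaceT => x /set_mem Sx.
  have h1 := @cont_form R n B Phi x.
  have h2 : {for x, continuous (fun v : 'rV[R]_n => (form B v v)^-1 : R^o)}.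
    apply: continuousV; last exact: cont_form1.
    by apply: lt0r_neq0; apply: pos; exact: Snz.
  exact: (continuousM h1 h2).
have [c /set_mem Sc cmin] := EVT_min_rV S0 cS cf.
have cnz := Snz _ Sc.
have fZ k W : k != 0 -> f (k *: W) = f W.
  move=> k0; have [->|Wnz] := eqVneq W 0; first by rewrite scaler0.
  have b0 : form B W W != 0 by apply: lt0r_neq0; apply: pos.
  rewrite /f -scalemxAl !(formZl, formZr).
  by field; rewrite b0 k0.
have hm W : f c * form B W W <= form B (W *m Phi) W.
  have [->|Wnz] := eqVneq W 0; first by rewrite mul0mx !form0l mulr0.
  have := cmin _ (mem_set (nS _ Wnz)).
  rewrite fZ; last by rewrite invr_eq0 normr_eq0.
  by rewrite /f ler_pdivlMr //; apply: pos.
have hc : f c * form B c c = form B (c *m Phi) c.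
  by rewrite /f divfK //; apply: lt0r_neq0; apply: pos.
have ec := @eig_of_min R n B Phi (f c) c sym pos sa hm hc.
have le : lam0 <= f c by apply: hmin; apply/eigenvalueP; exists c.
apply: le_trans (hm V).
apply: ler_wpM2r => //; exact: ltW (pos _ Vnz).
Qed.
Local Close Scope classical_set_scope.
Lemma form_psd (R : realType) n (B : 'M[R]_n) :
  (forall X, X != 0 -> 0 < form B X X) -> forall X, 0 <= form B X X.
Proof.
move=> pos X; have [->|nz] := eqVneq X 0; first by rewrite form0l.
exact/ltW/pos.
Qed.

Lemma main_alg (R : realType) (n : nat)
    (br : 'rV[R]_n -> 'rV[R]_n -> 'rV[R]_n) (B Phi : 'M[R]_n) (lam0 : R) :
  compact_lie_data br B ->
  metric_matrix B Phi ->
  nonneg_sec_curv br B Phi ->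
  eigenvalue Phi lam0 ->
  (forall V, lam0 * form B V V <= form B (V *m Phi) V) ->
  forall X Y : 'rV[R]_n,
    (X <= eigenspace Phi lam0)%MS ->
    br X Y = 0 ->
    (br X (Y *m invmx Phi) <= eigenspace Phi lam0)%MS.
Proof.
move=> [hlin [anti [_ [sym [pos adinv]]]]] [sa pd] [nabla [hk hcurv]] heig ray.
move=> X Y /eigenspaceP hXe hXY.
have brXX A : br A A = 0.
  have h := anti A A.
  have : (2 : R) *: br A A = 0 by rewrite scaler_nat mulr2n {1}h addNr.
  by move/eqP; rewrite scaler_eq0 pnatr_eq0 /= => /eqP.
have unit : Phi \in unitmx.
  rewrite -row_free_unit -kermx_eq0; apply/eqP/row_matrixP => i; rewrite row0.
  have := congr1 (row i) (mulmx_ker Phi); rewrite row_mul row0 => h.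
  apply/eqP/negPn/negP => nz; have := pd _ nz; by rewrite h form0l ltxx.
have [W defW] : {W | W = Y *m invmx Phi} by eexists.
rewrite -defW.
have hWP : W *m Phi = Y by rewrite defW mulmxKV.
have [Z defZ] : {Z | Z = br X W} by eexists.
rewrite -defZ; apply/eigenspaceP.
apply: (@eig_of_min R n B Phi lam0 Z sym pos sa ray).
have [ZP defZP] : {ZP | ZP = Z *m invmx Phi} by eexists.
have hZPP : ZP *m Phi = Z by rewrite defZP mulmxKV.
have lam_gt0 : 0 < lam0.
  move/eigenvalueP: heig => [v hv vnz]; have := pd _ vnz.
  rewrite hv formZl => h; have := pos _ vnz; nra.
have hXr A : lmetric B Phi A X = lam0 * form B A X by rewrite /lmetric sa hXe formZr.
have hYr A : lmetric B Phi A W = form B A Y by rewrite /lmetric sa hWP.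
have adX A : form B (br X A) X = 0.
  by have := adinv A X X; rewrite brXX form0r addr0.
have adY A : form B (br X A) Y = 0.
  by have := adinv A Y X; rewrite hXY form0r addr0.
have hWX : br W X = - Z by rewrite defZ anti.
have adW A : form B (br W A) X = form B A Z.
  by have := adinv A X W; rewrite hWX formNr => /eqP; rewrite subr_eq0 => /eqP.
have lmN A C : lmetric B Phi (- A) C = - lmetric B Phi A C by rewrite /lmetric mulNmx formNl.
have k1 := hk X (nabla W W) X.
rewrite !hXr adX brXX /lmetric mul0mx form0l anti formNl adX in k1.
have k2 := hk W (nabla X W) X.
rewrite !hXr adW hWX lmN hYr anti formNl adY in k2.
have e1 : lmetric B Phi Z (nabla X W) = lmetric B Phi (nabla X W) Z.
  by rewrite /lmetric sym sa.
rewrite e1 in k2.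
have hZP A : lmetric B Phi A ZP = form B A Z by rewrite /lmetric sa hZPP.
have k2a := hk X W ZP.
rewrite -defZ hYr adY hXr adW !hZP in k2a.
have k2b := hk X W Z.
rewrite -defZ hYr adY hXr adW in k2b.
have k3 := hk Z W X.
rewrite !hXr (anti Z W) formNl adW (anti Z X) hYr formNl adY hWX lmN in k3.
have hc := hcurv X W.
rewrite /curv /lmetric !mulmxBl !formBl -defZ in hc.
rewrite -!/(lmetric B Phi _ _) !hXr in hc.
have r1 := ray Z.
have r2 := ray ZP.
rewrite hZPP (sym Z ZP) in r2.
have d0 := @form_psd R n B pos (Z - lam0 *: ZP).
rewrite !(formBl, formBr, formZl, formZr) (sym Z ZP) in d0.
have r3 : 0 <= lam0 * (form B ZP Z - lam0 * form B ZP ZP).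
  by apply: mulr_ge0; lra.
move: k1 k2 k2a k2b k3 hc r1 r2 d0 r3.
rewrite /lmetric.
set t1 := form B (nabla X (nabla W W)) X.
set t2 := form B (nabla W (nabla X W)) X.
set t3 := form B (nabla Z W) X.
set p := form B (nabla X W) Z.
set q := form B (nabla X W *m Phi) Z.
set a := form B (Z *m Phi) Z.
set nn := form B Z Z.
set s := form B ZP Z.
set w := form B ZP ZP.

move=> k1 k2 k2a k2b k3 hc r1 r2 d0 r3.
nra.
Qed.

Theorem mainTheorem6 (R : realType) (n : nat)
    (br : 'rV[R]_n -> 'rV[R]_n -> 'rV[R]_n) (B Phi : 'M[R]_n) (lam0 : R) :
  compact_lie_data br B ->
  metric_matrix B Phi ->
  nonneg_sec_curv br B Phi ->
  eigenvalue Phi lam0 ->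
  (forall mu, eigenvalue Phi mu -> lam0 <= mu) ->
  forall X Y : 'rV[R]_n,
    (X <= eigenspace Phi lam0)%MS ->
    br X Y = 0 ->
    (br X (Y *m invmx Phi) <= eigenspace Phi lam0)%MS.
Proof.
move=> hL hM hN he hmin.
have [_ [_ [_ [sym [pos _]]]]] := hL.
have [sa _] := hM.
exact: (@main_alg R n br B Phi lam0 hL hM hN he (@rayleigh R n B Phi lam0 sym pos sa hmin)).
Qed.
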